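(* Consider the polynomial representation of $\mathbf H^{\mathrm{gr}}_N[c_1,\dots,c_{l-1}]$ by rational Demazure–Lusztig operators and the restriction map $\operatorname{Res}$ described in the context. (1) For each $i$, $\operatorname{Res}X_i=\sum_{j\le i}g_j\mathsf u_j$ for some rational functions $g_j=g_j(w_1,\dots,w_N)$, and the leading term of $\operatorname{Res}X_i$ is $g_i\mathsf u_i$. Moreover the leading term of $\operatorname{Res}X_N$ is $\prod_{j\ne N}\frac{w_N-w_j-\mathbf t}{w_N-w_j}\mathsf u_N$. (2) For each $i$, $\operatorname{Res}X_i^{-1}=\sum_{j\ge i}g'_j\mathsf u_j^{-1}$ for some rational functions $g'_j$, and the leading term of $\operatorname{Res}X_i^{-1}$ is $g'_i\mathsf u_i^{-1}$. Moreover the leading term of $\operatorname{Res}X_1^{-1}$ is $\prod_{j\ne1}\frac{w_1-w_j+\mathbf t}{w_1-w_j}\mathsf u_1^{-1}$. (3) For each $i$, $\operatorname{Res}Y_i=\sum_{j\ge i}g''_j\mathsf u_j^{-1}$ for some rational functions $g''_j$, and the leading term of $\operatorname{Res}Y_i$ is $g''_i\mathsf u_i^{-1}$. Moreover the leading term of $\operatorname{Res}Y_1$ is $\prod_{k=1}^l(w_1-\hbar-z_k)\prod_{j\ne1}\frac{w_1-w_j+\mathbf t}{w_1-w_j}\mathsf u_1^{-1}$.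
   Context: $\mathbf H^{\mathrm{gr}}_N$ is the $\mathbb C[\hbar,\mathbf t]$-algebra generated by $s_1,\dots,s_{N-1}$, $X_i^{\pm1}$, $w_i$ ($1\le i\le N$) with relations: $w$'s commute, $X$'s commute, $X_iX_i^{-1}=X_i^{-1}X_i=1$, Coxeter relations of $\mathfrak S_N$ for the $s_i$ ($s_{ij}$ = transposition $(ij)$), $s_iw_i=w_{i+1}s_i-\mathbf t$, $s_iw_{i+1}=w_is_i+\mathbf t$, $s_iw_j=w_js_i$ ($j\ne i,i+1$), $\sigma X_i^{\pm1}=X_{\sigma(i)}^{\pm1}\sigma$, $[w_i,X_j]=-\mathbf tX_js_{ji}$ ($i>j$), $-\mathbf tX_is_{ij}$ ($i<j$), $[w_i,X_i]=-\hbar X_i+\mathbf t\sum_{k<i}X_ks_{ki}+\mathbf t\sum_{k>i}X_is_{ik}$. Let $l\ge1$, $\varepsilon$ a primitive $l$-th root of unity, $c_1,\dots,c_{l-1}$ indeterminates, $z_k=-l^{-1}\big((l-k)\hbar+\sum_{m=1}^{l-1}(1+\varepsilon^m+\dots+\varepsilon^{(k-1)m})c_m\big)$, and define $Y_i=\prod_{k=1}^l\big(w_i-\hbar-z_k+\mathbf t\sum_{j>i}s_{ij}\big)X_i^{-1}\in\mathbf H^{\mathrm{gr}}_N[c_1,\dots,c_{l-1}]$ (factors ordered $k=1,\dots,l$ left to right; this is the image of $e_\Gamma(l^{-1}\eta_i)^le_\Gamma$ under Oblomkov's embedding of the partially symmetrized cyclotomic rational Cherednik algebra). Representation: on $P=\mathbb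 C[\hbar,\mathbf t,c_1,\dots,c_{l-1}][w_1,\dots,w_N]$, $w_i$ acts by multiplication; $s_i$ ($1\le i\le N-1$) acts by $s_i^w+\frac{\mathbf t}{w_i-w_{i+1}}(s_i^w-1)$, where $s_i^w$ swaps the variables $w_i,w_{i+1}$; let $\pi$ be the operator $(\pi g)(w_1,\dots,w_N)=g(w_2,\dots,w_N,w_1+\hbar)$; $X_1$ acts by $\pi s_{N-1}\cdots s_1$ (with $s_i$ the operators above), $X_{i+1}=s_iX_is_i$, and $X_i^{-1}$ acts by the inverse operator. For $\lambda\in\mathbb Z^N$ let $\mathsf u^\lambda$ be the shift operator $(\mathsf u^\lambda g)(w)=g(w_1+\lambda_1\hbar,\dots,w_N+\lambda_N\hbar)$, $\mathsf u_i=\mathsf u^{\varepsilon_i}$. Every element acts by an operator $\sum_{\lambda,\sigma}g_{\lambda,\sigma}\mathsf u^\lambda\sigma$ ($\sigma\in\mathfrak S_N$ permuting variables, $g_{\lambda,\sigma}$ rational functions in $w$), and $\operatorname{Res}$ of it, i.e. its restriction to symmetric polynomials, is the difference operator $\sum_\lambda(\sum_\sigma g_{\lambda,\sigma})\mathsf u^\lambda$. Order: on $P_{\mathrm{wt}}=\bigoplus_i\mathbb Z\varepsilon_i$, $\lambda\le\mu$ iff $\mu-\lambda\in\sum_{i<j}\mathbb Z_{\ge0}(\varepsilon_i-\varepsilon_j)$; $\lambda^+$ is the unique dominant (nonincreasing coordinates) element of the $\mathfrak S_N$-orbit of $\lambda$; $\lambda\lessdot\mu$ iff $\lambda^+<\mu^+$,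 or $\lambda^+=\mu^+$ and $\lambda>\mu$. The leading term of a difference operator $\sum_\lambda g_\lambda\mathsf u^\lambda$ is $g_{\lambda_0}\mathsf u^{\lambda_0}$ where $g_{\lambda_0}\ne0$ and every other $\lambda$ with $g_\lambda\neq0$ satisfies $\lambda\lessdot\lambda_0$. *)

(* Defs.v *)
From HB Require Import structures.
From mathcomp Require Import all_boot all_order all_algebra all_fingroup all_field.
From mathcomp Require Import mpoly.

Set Implicit Arguments.
Unset Strict Implicit.
Unset Printing Implicit Defensive.

Import Order.TTheory GRing.Theory Num.Theory.
Local Open Scope ring_scope.

(* Setting.  N = n.+1 (so N >= 1), l >= 1.  All rational functions live in    *)
(*   K = algC(w_1..w_N, hbar, t, c_1..c_{l-1})                                *)
(* realised as the fraction field of {mpoly algC[N + l.+1]}: variable         *)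
(* (lshift i) is w_(i+1) (0-based i), (rshift N 0) is hbar, (rshift N 1) is t *)
(* and (rshift N m.+1) is c_m (1 <= m <= l-1).                                *)
(* An operator  sum g_{lambda,sigma} u^lambda sigma  is represented by a      *)
(* finite list of terms (g, p, a) with g in K, p a permutation of 'I_N and    *)
(* a in Z^N; the term acts on f in K by                                       *)
(*        f  |->  g * f[w_k := w_(p k) + a_k hbar]                            *)
(* (i.e. it is g u^lambda sigma with sigma = (f |-> f[w_k := w_(p k)]) and    *)

Section Ops.
Variables (n l : nat).
Local Notation N := n.+1.

Definition nv := (N + l.+1)%N.
Definition Pol := {mpoly algC[nv]}.
Definition Kf := {fraction Pol}.

Definition tof (p : Pol) : Kf := FracField.tofrac p.

Definition wP (i : 'I_N) : Pol := 'X_(lshift l.+1 i).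
Definition hP : Pol := 'X_(rshift N (ord0 : 'I_l.+1)).
Definition tP : Pol := 'X_(rshift N (inord 1 : 'I_l.+1)).
Definition cP (m : nat) : Pol := 'X_(rshift N (inord m.+1 : 'I_l.+1)).

Definition w (i : 'I_N) : Kf := tof (wP i).
Definition hb : Kf := tof hP.
Definition tt_ : Kf := tof tP.
Definition cc (m : nat) : Kf := tof (cP m).
Definition cstC (x : algC) : Kf := tof (x%:MP).

Definition wt := {ffun 'I_N -> int}.

Definition subst_img (p : {perm 'I_N}) (a : wt) (k : 'I_nv) : Pol :=
  match split k with
  | inl i => wP (p i) + (a i)%:~R * hP
  | inr _ => 'X_k
  end.
Definition substP (p : {perm 'I_N}) (a : wt) (q : Pol) : Pol :=
  q \mPo [tuple subst_img p a k | k < nv].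
Definition substK (p : {perm 'I_N}) (a : wt) (x : Kf) : Kf :=
  tof (substP p a (\n_(generic_quotient.repr x))) / tof (substP p a (\d_(generic_quotient.repr x))).

Definition term := (Kf * {perm 'I_N} * wt)%type.
Definition tc (x : term) : Kf := x.1.1.
Definition tp (x : term) : {perm 'I_N} := x.1.2.
Definition ta (x : term) : wt := x.2.
Definition Op := seq term.

Definition wt0 : wt := [ffun => 0].

Definition mulT (x y : term) : term :=
  (tc x * substK (tp x) (ta x) (tc y), (tp y * tp x)%g,
   [ffun k => ta x (tp y k) + ta y k]).
Definition mulO (A B : Op) : Op := [seq mulT x y | x <- A, y <- B].
Definition addO (A B : Op) : Op := A ++ B.
Definition scaleO (c : Kf) (A : Op) : Op := [seq (c * tc x, tp x, ta x) | x <- A].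
Definition constO (c : Kf) : Op := [:: (c, 1%g, wt0)].
Definition oneO : Op := constO 1.
Definition prodO (s : seq Op) : Op := foldr mulO oneO s.

(* s_(k+1) (paper numbering) = sop k, acting by
   s^w + t/(w_(k+1) - w_(k+2)) (s^w - 1) *)
Definition sop (k : nat) : Op :=
  let i : 'I_N := inord k in let j : 'I_N := inord k.+1 in
  let a := tt_ / (w i - w j) in
  [:: (1 + a, tperm i j, wt0); (- a, 1%g, wt0)].

(* pi : g(w_1..w_N) |-> g(w_2,..,w_N,w_1+hbar), and its inverse *)
Definition cycP : {perm 'I_N} := perm (can_inj (@ordSK N)).
Definition cycinvP : {perm 'I_N} := perm (can_inj (@ord_predK N)).
Definition piO : Op := [:: (1, cycP, [ffun k => ((k == ord_max) : nat)%:Z])].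
Definition piinvO : Op :=
  [:: (1, cycinvP, [ffun k => - ((k == ord0) : nat)%:Z])].

(* X_(k+1) (paper numbering) = Xop k *)
Definition X0 : Op := mulO piO (prodO [seq sop k | k <- rev (iota 0 n)]).
Fixpoint Xop (k : nat) : Op :=
  if k is k'.+1 then mulO (sop k') (mulO (Xop k') (sop k')) else X0.

(* X_(k+1)^-1 = Xinvop k  (the inverse operators; uses s_i^2 = 1) *)
Definition Xinv0 : Op := mulO (prodO [seq sop k | k <- iota 0 n]) piinvO.
Fixpoint Xinvop (k : nat) : Op :=
  if k is k'.+1 then mulO (sop k') (mulO (Xinvop k') (sop k')) else Xinv0.

(* transposition s_(i+1, i+d+2) (paper numbering) *)
Fixpoint stp (i d : nat) : Op :=
  if d is d'.+1 then mulO (sop i) (mulO (stp i.+1 d') (sop i)) else sop i.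
(* sum_{j > i+1} s_{i+1, j}  (paper numbering) *)
Definition sumS (i : nat) : Op := flatten [seq stp i d | d <- iota 0 (n - i)].

Variable eps : algC.

Definition zk (kap : nat) : Kf :=
  - (l%:R)^-1 * ((l - kap)%:R * hb +
      \sum_(1 <= m < l) cstC (\sum_(r < kap) eps ^+ (r * m)) * cc m).

(* Y_(i+1) (paper numbering) = Yop i *)
Definition Yfactor (i : 'I_N) (kap : nat) : Op :=
  addO (constO (w i - hb - zk kap)) (scaleO tt_ (sumS i)).
Definition Yop (i : 'I_N) : Op :=
  mulO (prodO [seq Yfactor i kap | kap <- iota 1 l]) (Xinvop i).

(* Res: coefficient of u^lambda in Res of an operator *)
Definition lam (x : term) : wt := [ffun j => ta x ((tp x)^-1 j)%g].
Definition resc (A : Op) (lambda : wt) : Kf :=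
  \sum_(x <- A | lam x == lambda) tc x.

Definition ew (i : 'I_N) : wt := [ffun j => ((j == i) : nat)%:Z].
Definition ewinv (i : 'I_N) : wt := [ffun j => - ((j == i) : nat)%:Z].

Definition wle (lambda mu : wt) : Prop :=
  exists c : 'I_N -> 'I_N -> nat, forall k : 'I_N,
    mu k - lambda k =
    \sum_(i < N) \sum_(j < N | (i < j)%N)
       (c i j)%:Z * (((k == i) : nat)%:Z - ((k == j) : nat)%:Z).
Definition wlt (lambda mu : wt) : Prop := wle lambda mu /\ lambda <> mu.
Definition dominant (nu : wt) : Prop := forall i j : 'I_N, (i <= j)%N -> nu j <= nu i.
Definition dom_of (lambda nu : wt) : Prop :=
  dominant nu /\ exists s : {perm 'I_N}, forall k, nu k = lambda (s k).
Definition lessdot (lambda mu : wt) : Prop :=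
  exists lp mp, dom_of lambda lp /\ dom_of mu mp /\
    (wlt lp mp \/ (lp = mp /\ wlt mu lambda)).

Definition leading (A : Op) (lambda0 : wt) (g0 : Kf) : Prop :=
  resc A lambda0 = g0 /\ g0 != 0 /\
  forall lambda, lambda != lambda0 -> resc A lambda != 0 -> lessdot lambda lambda0.

End Ops.

(* Main.v *)
Require Import Defs.
From HB Require Import structures.
From mathcomp Require Import all_boot all_order all_algebra all_fingroup all_field.
From mathcomp Require Import mpoly ring.
From Stdlib Require Import FunctionalExtensionality.
Import Order.TTheory GRing.Theory Num.Theory.
Local Open Scope ring_scope.

Module A.
Import Order.TTheory GRing.Theory Num.Theory.
Local Open Scope ring_scope.
Set Implicit Arguments.
Unset Strict Implicit.
Unset Printing Implicit Defensive.

Lemma fracE (R : idomainType) (x : {fraction R}) :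
  x = tofrac (\n_(generic_quotient.repr x)) / tofrac (\d_(generic_quotient.repr x)).
Proof.
have dn0 : \d_(generic_quotient.repr x) != 0 by apply: denom_ratioP.
rewrite -[x in LHS]generic_quotient.reprK.
rewrite -[generic_quotient.repr x in LHS]Ratio_numden.
set nn := \n_(generic_quotient.repr x); set dd := \d_(generic_quotient.repr x).
have -> : Ratio nn dd = FracField.mulf (Ratio nn 1) (FracField.invf (Ratio dd 1)).
  rewrite /FracField.mulf /FracField.invf !numden_Ratio ?oner_eq0 //.
  by rewrite mulr1 mul1r.
rewrite FracField.pi_mul FracField.pi_inv.
by unlock FracField.tofrac.
Qed.

Lemma comp_mpolyA (nn : nat) (R : comNzRingType) (k j : nat) (p : {mpoly R[nn]})
  (lq : nn.-tuple {mpoly R[k]}) (lr : k.-tuple {mpoly R[j]}) :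
  (p \mPo lq) \mPo lr = p \mPo [tuple (tnth lq i) \mPo lr | i < nn].
Proof.
rewrite [p \mPo lq]comp_mpolyEX [RHS]comp_mpolyEX raddf_sum /=; apply: eq_bigr => m _.
rewrite comp_mpolyZ !comp_mpolyX rmorph_prod; congr (_ *: _).
by apply: eq_bigr => i _; rewrite rmorphXn tnth_map tnth_ord_tuple.
Qed.


Section Subst.
Variables n l : nat.
Local Notation N := n.+1.
Local Notation Kf := (Kf n l).
Local Notation Pol := (Pol n l).
Local Notation tof := (@tof n l).
Local Notation wt := (wt n).
Local Notation T p a := [tuple @subst_img n l p a k | k < nv n l].
Local Notation substP := (@substP n l).
Local Notation substK := (@substK n l).
Local Notation subst_img := (@subst_img n l).

Lemma split_lsh (i : 'I_N) : split (lshift l.+1 i) = inl i.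
Proof. by rewrite -[lshift _ _]/(unsplit (inl i)) unsplitK. Qed.
Lemma split_rsh (j : 'I_l.+1) : split (rshift N j) = inr j.
Proof. by rewrite -[rshift _ _]/(unsplit (inr j)) unsplitK. Qed.

Lemma substP_X p a k : 'X_k \mPo T p a = subst_img p a k.
Proof. by rewrite comp_mpolyXU -tnth_nth tnth_mktuple. Qed.

Lemma substP_hP p a : substP p a (hP n l) = hP n l.
Proof. by rewrite /substP /hP substP_X /subst_img split_rsh. Qed.

Lemma substP_rsh p a j : substP p a 'X_(rshift N j) = 'X_(rshift N j).
Proof. by rewrite /substP substP_X /subst_img split_rsh. Qed.

Lemma substP_wP p a i : substP p a (wP l i) = wP l (p i) + (a i)%:~R * hP n l.
Proof. by rewrite /substP /wP substP_X /subst_img split_lsh. Qed.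

Lemma substP_C p a c : substP p a c%:MP = c%:MP.
Proof. by rewrite /substP comp_mpolyC. Qed.

Lemma substPD p a : {morph substP p a : x y / x + y}.
Proof. by move=> x y; rewrite /substP rmorphD. Qed.
Lemma substPM p a : {morph substP p a : x y / x * y}.
Proof. by move=> x y; rewrite /substP rmorphM. Qed.
Lemma substP1 p a : substP p a 1 = 1.
Proof. by rewrite /substP rmorph1. Qed.
Lemma substP0 p a : substP p a 0 = 0.
Proof. by rewrite /substP rmorph0. Qed.

Definition wcomp (p : {perm 'I_N}) (a : wt) (q : {perm 'I_N}) (b : wt) : wt :=
  [ffun k => a (q k) + b k].

Lemma subst_img_comp p a q b k :
  subst_img q b k \mPo T p a = subst_img (q * p)%g (wcomp p a q b) k.
Proof.
rewrite /subst_img; case E: (split k) => [i|j].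
  rewrite -/(substP p a _) substPD substPM substP_wP substP_hP.
  rewrite /substP rmorph_int permM ffunE intrD mulrDl addrA //.
by rewrite substP_X /subst_img E.
Qed.

Lemma substP_comp p a q b x :
  substP p a (substP q b x) = substP (q * p)%g (wcomp p a q b) x.
Proof.
rewrite /substP comp_mpolyA; congr (_ \mPo _).
apply: eq_from_tnth => k; rewrite !tnth_mktuple.
exact: subst_img_comp.
Qed.

Lemma substP_id x : substP 1%g [ffun => 0] x = x.
Proof.
rewrite /substP -[RHS]comp_mpoly_id; congr (_ \mPo _).
apply: eq_from_tnth => k; rewrite !tnth_mktuple /subst_img.
case E: (split k) => [i|j] //.
rewrite ffunE mul0r addr0 perm1 /wP; congr 'X_(_).
by rewrite -[k]splitK E.
Qed.

Definition winv (p : {perm 'I_N}) (a : wt) : wt := [ffun j => - a ((p^-1)%g j)].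

Lemma substP_inv p a x : substP (p^-1)%g (winv p a) (substP p a x) = x.
Proof.
rewrite substP_comp mulgV -[RHS]substP_id; congr substP.
by apply/ffunP => k; rewrite !ffunE permK addNr.
Qed.

Lemma substP_eq0 p a x : (substP p a x == 0) = (x == 0).
Proof.
apply/eqP/eqP => [|->]; last exact: substP0.
by move=> H; rewrite -(substP_inv p a x) H substP0.
Qed.

Lemma tof_neq0 (x : Pol) : x != 0 -> tof x != 0.
Proof. by rewrite /tof tofrac_eq0. Qed.

Lemma substK_frac p a x nn dd : dd != 0 -> x = tof nn / tof dd ->
  substK p a x = tof (substP p a nn) / tof (substP p a dd).
Proof.
move=> dd0 Hx; rewrite /substK.
set n0 := \n_(generic_quotient.repr x); set d0 := \d_(generic_quotient.repr x).
have d00 : d0 != 0 by apply: denom_ratioP.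
have Ex : x = tof n0 / tof d0 by rewrite /tof /n0 /d0 -fracE.
have : n0 * dd = nn * d0.
  apply/eqP; rewrite -(tofrac_eq (R := Pol)) !tofracM -/tof.
  rewrite -eqr_div ?tof_neq0 // -Ex -Hx //.
move=> E; apply/eqP; rewrite eqr_div ?tof_neq0 ?substP_eq0 //.
by rewrite /tof -!tofracM -!substPM E.
Qed.

Lemma substK_tof p a q : substK p a (tof q) = tof (substP p a q).
Proof.
rewrite (@substK_frac p a (tof q) q 1) ?oner_eq0 //.
  by rewrite substP1 /tof tofrac1 divr1.
by rewrite /tof tofrac1 divr1.
Qed.

Lemma divB_gen (F : fieldType) (x y z t : F) : y != 0 -> t != 0 ->
  x / y - z / t = (x * t - z * y) / (y * t).
Proof. by move=> y0 t0; field; rewrite y0 t0. Qed.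
Lemma divM_gen (F : fieldType) (x y z t : F) :
  x / y * (z / t) = (x * z) / (y * t).
Proof. by rewrite invfM mulrACA. Qed.

Lemma substK_is_zmod p a : zmod_morphism (substK p a).
Proof.
move=> x y.
set xn := \n_(generic_quotient.repr x); set xd := \d_(generic_quotient.repr x).
set yn := \n_(generic_quotient.repr y); set yd := \d_(generic_quotient.repr y).
have xd0 : xd != 0 by apply: denom_ratioP.
have yd0 : yd != 0 by apply: denom_ratioP.
have Ex : x = tof xn / tof xd by rewrite /tof /xn /xd -fracE.
have Ey : y = tof yn / tof yd by rewrite /tof /yn /yd -fracE.
have H : x - y = tof (xn * yd - yn * xd) / tof (xd * yd).
  by rewrite Ex Ey divB_gen ?tof_neq0 // /tof tofracB !tofracM.
rewrite (substK_frac _ _ _ H) ?mulf_neq0 // (substK_frac _ _ _ Ex) //.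
rewrite (substK_frac _ _ _ Ey) //.
rewrite divB_gen ?tof_neq0 ?substP_eq0 //.
by rewrite /substP rmorphB !rmorphM /tof tofracB !tofracM.
Qed.

Lemma substK_is_monoid p a : monoid_morphism (substK p a).
Proof.
split.
  have -> : (1 : Kf) = tof 1 by rewrite /tof tofrac1.
  by rewrite substK_tof substP1.
move=> x y.
set xn := \n_(generic_quotient.repr x); set xd := \d_(generic_quotient.repr x).
set yn := \n_(generic_quotient.repr y); set yd := \d_(generic_quotient.repr y).
have xd0 : xd != 0 by apply: denom_ratioP.
have yd0 : yd != 0 by apply: denom_ratioP.
have Ex : x = tof xn / tof xd by rewrite /tof /xn /xd -fracE.
have Ey : y = tof yn / tof yd by rewrite /tof /yn /yd -fracE.
have H : x * y = tof (xn * yn) / tof (xd * yd).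
  by rewrite Ex Ey divM_gen /tof !tofracM.
rewrite (substK_frac _ _ _ H) ?mulf_neq0 // (substK_frac _ _ _ Ex) //.
rewrite (substK_frac _ _ _ Ey) //.
by rewrite divM_gen !substPM /tof !tofracM.
Qed.

HB.instance Definition _ p a :=
  GRing.isZmodMorphism.Build Kf Kf (substK p a) (substK_is_zmod p a).
HB.instance Definition _ p a :=
  GRing.isMonoidMorphism.Build Kf Kf (substK p a) (substK_is_monoid p a).

Lemma substK_comp p a q b x :
  substK p a (substK q b x) = substK (q * p)%g (wcomp p a q b) x.
Proof.
have d0 : \d_(generic_quotient.repr x) != 0 by apply: denom_ratioP.
have -> : substK q b x = tof (substP q b \n_(generic_quotient.repr x)) /
   tof (substP q b \d_(generic_quotient.repr x)) by [].
rewrite (substK_frac _ _ _ (erefl _)) ?substP_eq0 //.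
by rewrite !substP_comp.
Qed.

Lemma substK_id x : substK 1%g [ffun => 0] x = x.
Proof. by rewrite /substK !substP_id /tof -fracE. Qed.

End Subst.

End A.

Module B.
Import A.
Import Order.TTheory GRing.Theory Num.Theory.
Local Open Scope ring_scope.
Set Implicit Arguments.
Unset Strict Implicit.
Unset Printing Implicit Defensive.

Section Act.
Variables n l : nat.
Local Notation N := n.+1.
Local Notation Kf := (Kf n l).
Local Notation Pol := (Pol n l).
Local Notation tof := (@tof n l).
Local Notation wt := (wt n).
Local Notation substK := (@substK n l).
Local Notation term := (term n l).
Local Notation Op := (Op n l).
Local Notation w := (@w n l).
Local Notation hb := (hb n l).
Local Notation tt_ := (tt_ n l).
Local Notation wt0 := (wt0 n).

Lemma substK_w p a i : substK p a (w i) = w (p i) + (a i)%:~R * hb.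
Proof. by rewrite /w substK_tof substP_wP /tof rmorphD rmorphM rmorph_int. Qed.
Lemma substK_hb p a : substK p a hb = hb.
Proof. by rewrite /hb substK_tof substP_hP. Qed.
Lemma substK_tt p a : substK p a tt_ = tt_.
Proof. by rewrite /tt_ substK_tof /tP substP_rsh. Qed.
Lemma substK_cc p a m : substK p a (cc n l m) = cc n l m.
Proof. by rewrite /cc substK_tof /cP substP_rsh. Qed.
Lemma substK_cst p a c : substK p a (cstC n l c) = cstC n l c.
Proof. by rewrite /cstC substK_tof substP_C. Qed.
Lemma substK_zk p a eps k : substK p a (zk n l eps k) = zk n l eps k.
Proof.
rewrite /zk rmorphM rmorphN fmorphV !rmorph_nat rmorphD rmorphM rmorph_nat.
rewrite /=.
rewrite substK_hb rmorph_sum; congr (_ * (_ + _)).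
by apply: eq_bigr => m _; rewrite rmorphM /= substK_cst substK_cc.
Qed.
Lemma substK_w0 p i : substK p wt0 (w i) = w (p i).
Proof. by rewrite substK_w ffunE mul0r addr0. Qed.

Definition V := wt -> Kf.
Definition sb (x : term) (mu : wt) : wt := [ffun k => mu (tp x k) - ta x k].
Definition actT (x : term) (R : V) : V :=
  fun mu => tc x * substK (tp x) (ta x) (R (sb x mu)).
Definition act (A : Op) (R : V) : V := fun mu => \sum_(x <- A) actT x R mu.
Definition delta (lam : wt) : V := fun mu => if mu == lam then 1 else 0.

Lemma sb_eq0 x mu : (sb x mu == wt0) = (lam x == mu).
Proof.
apply/eqP/eqP => H.
  apply/ffunP => j; rewrite ffunE.
  have := congr1 (fun f : wt => f ((tp x)^-1 j)%g) H.
  by rewrite !ffunE permKV => /eqP; rewrite subr_eq0 => /eqP ->.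
by apply/ffunP => k; rewrite !ffunE -H ffunE permK subrr.
Qed.

Lemma resc_act A mu : resc A mu = act A (delta wt0) mu.
Proof.
rewrite /resc big_mkcond /act; apply: eq_bigr => x _.
rewrite /actT /delta sb_eq0; case: eqP => _.
  by rewrite rmorph1 mulr1.
by rewrite rmorph0 mulr0.
Qed.

Lemma actT_mulT x y R mu : actT (mulT x y) R mu = actT x (actT y R) mu.
Proof.
rewrite /actT rmorphM /= substK_comp mulrA /=; congr (_ * substK _ _ (R _)).
by apply/ffunP => k; rewrite !ffunE permM opprD addrA.
Qed.

Lemma act_mulO A B R mu : act (mulO A B) R mu = act A (act B R) mu.
Proof.
rewrite /act /mulO big_allpairs_dep; apply: eq_bigr => x _.
under eq_bigr do rewrite actT_mulT.
by rewrite [RHS]/actT rmorph_sum mulr_sumr.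
Qed.

Lemma act_mulOf A B R : act (mulO A B) R = act A (act B R).
Proof. by apply: functional_extensionality => mu; apply: act_mulO. Qed.

Lemma act_cat A B R mu : act (A ++ B) R mu = act A R mu + act B R mu.
Proof. by rewrite /act big_cat. Qed.

Lemma act_scaleO c A R mu : act (scaleO c A) R mu = c * act A R mu.
Proof.
rewrite /act /scaleO big_map mulr_sumr; apply: eq_bigr => x _.
by rewrite /actT mulrA.
Qed.

Lemma sb_one (x : term) mu : tp x = 1%g -> ta x = wt0 -> sb x mu = mu.
Proof. by move=> Hp Ha; apply/ffunP => k; rewrite ffunE Hp Ha perm1 ffunE subr0. Qed.

Lemma act_const c R mu : act (constO c) R mu = c * R mu.
Proof.
rewrite /act big_seq1 /actT /= substK_id sb_one //.
Qed.

Lemma act_flatten (L : seq Op) R mu :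
  act (flatten L) R mu = \sum_(A <- L) act A R mu.
Proof. by rewrite /act big_flatten. Qed.

Lemma act_nil R mu : act [::] R mu = 0.
Proof. by rewrite /act big_nil. Qed.

Lemma act_add A R1 R2 mu :
  act A (fun nu => R1 nu + R2 nu) mu = act A R1 mu + act A R2 mu.
Proof.
rewrite /act -big_split; apply: eq_bigr => x _.
by rewrite /actT rmorphD mulrDr.
Qed.

Lemma act_sum A (I : Type) (r : seq I) (F : I -> V) mu :
  act A (fun nu => \sum_(i <- r) F i nu) mu = \sum_(i <- r) act A (F i) mu.
Proof.
rewrite /act exchange_big; apply: eq_bigr => x _.
by rewrite /actT rmorph_sum mulr_sumr.
Qed.

Lemma act_scal A c R mu :
  (forall x : term, substK (tp x) (ta x) c = c) ->
  act A (fun nu => c * R nu) mu = c * act A R mu.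
Proof.
move=> Hc; rewrite /act mulr_sumr; apply: eq_bigr => x _.
by rewrite /actT rmorphM /= Hc mulrCA.
Qed.

End Act.

End B.

Module C.
Import A B.
Import Order.TTheory GRing.Theory Num.Theory.
Local Open Scope ring_scope.
Set Implicit Arguments.
Unset Strict Implicit.
Unset Printing Implicit Defensive.

Section Sops.
Variables n l : nat.
Local Notation N := n.+1.
Local Notation Kf := (Kf n l).
Local Notation Pol := (Pol n l).
Local Notation tof := (@tof n l).
Local Notation wt := (wt n).
Local Notation substK := (@substK n l).
Local Notation term := (term n l).
Local Notation Op := (Op n l).
Local Notation w := (@w n l).
Local Notation hb := (hb n l).
Local Notation tt_ := (tt_ n l).
Local Notation wt0 := (wt0 n).
Local Notation act := (@B.act n l).
Local Notation V := (B.V n l).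
Local Notation delta := (@B.delta n l).

Lemma hb_neq0 : hb != 0.
Proof.
rewrite /hb tof_neq0 //; apply/eqP => H.
have := congr1 (meval (fun m : 'I_(nv n l) => (m == rshift N ord0)%:R)) H.
by rewrite mevalXU eqxx meval0 => /eqP; rewrite oner_eq0.
Qed.

Lemma shift_neq0 p a (X : Kf) : substK p a X = X + hb -> X != 0.
Proof.
move=> H; apply/eqP => X0; move: H; rewrite X0 rmorph0 add0r => /esym/eqP.
by rewrite (negbTE hb_neq0).
Qed.

Lemma ew_at (i j : 'I_N) : ((ew i j)%:~R : Kf) = (j == i)%:R.
Proof. by rewrite ffunE; case: (j == i). Qed.

Lemma wdiff_neq0 (i j : 'I_N) (c : Kf) : i != j -> substK 1%g (ew i) c = c ->
  w i - w j + c != 0.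
Proof.
move=> ij Hc; apply: (@shift_neq0 1%g (ew i)).
rewrite !rmorphD rmorphN /= Hc !substK_w !ew_at eqxx eq_sym (negbTE ij) !perm1.
by rewrite mul1r mul0r addr0; ring.
Qed.

Lemma w_neq (i j : 'I_N) : i != j -> w i - w j != 0.
Proof.
move=> ij; have := @wdiff_neq0 i j 0 ij; rewrite rmorph0 addr0; exact.
Qed.

Lemma wt_neq (i j : 'I_N) : i != j -> w i - w j + tt_ != 0.
Proof. by move=> ij; apply: wdiff_neq0 => //; rewrite substK_tt. Qed.

Lemma wmt_neq (i j : 'I_N) : i != j -> w i - w j - tt_ != 0.
Proof. by move=> ij; apply: wdiff_neq0 => //; rewrite rmorphN /= substK_tt. Qed.

Lemma Dfac_neq (i : 'I_N) eps k : w i - hb - zk n l eps k != 0.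
Proof.
apply: (@shift_neq0 1%g (ew i)).
rewrite !rmorphB /= substK_zk substK_hb substK_w ew_at eqxx perm1 mul1r; ring.
Qed.

Definition ik k : 'I_N := inord k.
Definition jk k : 'I_N := inord k.+1.
Definition tk k := tperm (ik k) (jk k).
Notation sg k := (substK (tk k) wt0).
Definition sw k (mu : wt) : wt := [ffun m => mu (tk k m) - wt0 m].
Definition ak k := tt_ / (w (ik k) - w (jk k)).
Definition S k := act (sop n l k).

Lemma ij_neq k : (k < n)%N -> ik k != jk k.
Proof.
move=> kn; rewrite /ik /jk; apply/eqP => /(congr1 val) /=.
rewrite !inordK ?ltnS ?(ltnW kn) //.
exact: n_Sn.
Qed.

Lemma act_sop k R mu :
  S k R mu = (1 + ak k) * sg k (R (sw k mu)) + (- ak k) * R mu.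
Proof.
rewrite /S /B.act /sop big_cons big_seq1 /actT; congr (_ + _).
by rewrite [tp _]/= [ta _]/= substK_id sb_one.
Qed.

Lemma rm_lin (F : fieldType) (f : {rmorphism F -> F}) (a X Y : F) :
  f ((1 + a) * X + (- a) * Y) = (1 + f a) * f X + (- f a) * f Y.
Proof. by rewrite rmorphD !rmorphM rmorphN rmorphD rmorph1. Qed.

Lemma sg_sg k x : sg k (sg k x) = x.
Proof.
rewrite substK_comp.
have -> : (tk k * tk k)%g = 1%g by apply/permP => m; rewrite permM tpermK perm1.
have -> : wcomp (tk k) wt0 (tk k) wt0 = [ffun => 0].
  by apply/ffunP => m; rewrite !ffunE addr0.
exact: substK_id.
Qed.

Lemma sw_sw k mu : sw k (sw k mu) = mu.
Proof. by apply/ffunP => m; rewrite !ffunE tpermK !subr0. Qed.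

Lemma sg_a k : sg k (ak k) = - ak k.
Proof.
rewrite /ak rmorphM fmorphV rmorphB /= !substK_w0 substK_tt /tk.
by rewrite tpermL tpermR -opprB invrN mulrN.
Qed.

Lemma sg_w_i k : sg k (w (ik k)) = w (jk k).
Proof. by rewrite substK_w0 /tk tpermL. Qed.
Lemma sg_w_j k : sg k (w (jk k)) = w (ik k).
Proof. by rewrite substK_w0 /tk tpermR. Qed.

Lemma S_inv k R : S k (S k R) = R.
Proof.
apply: functional_extensionality => mu.
rewrite act_sop !act_sop sw_sw.
rewrite rm_lin /= sg_sg sg_a; ring.
Qed.

Lemma S_w k R mu : (k < n)%N ->
  S k (fun nu => w (jk k) * R nu) mu = w (ik k) * S k R mu + tt_ * R mu.
Proof.
move=> kn; rewrite !act_sop (rmorphM _ (w (jk k))) /= sg_w_j.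
have ha : ak k * (w (ik k) - w (jk k)) = tt_ by rewrite /ak divfK // w_neq // ij_neq.
rewrite -ha; ring.
Qed.

Lemma S_scal k c R mu : sg k c = c ->
  S k (fun nu => c * R nu) mu = c * S k R mu.
Proof. by move=> Hc; rewrite !act_sop (rmorphM _ c) /= Hc; ring. Qed.

Lemma S_add k R1 R2 mu : S k (fun nu => R1 nu + R2 nu) mu = S k R1 mu + S k R2 mu.
Proof. exact: act_add. Qed.

Lemma S_delta0 k : S k (delta wt0) = delta wt0.
Proof.
apply: functional_extensionality => mu; rewrite act_sop.
have -> : delta wt0 (sw k mu) = delta wt0 mu.
  rewrite /delta; congr (if _ then _ else _); apply/eqP/eqP => H.
    by rewrite -[mu](sw_sw k) H; apply/ffunP => m; rewrite !ffunE subr0.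
  by rewrite H; apply/ffunP => m; rewrite !ffunE subr0.
rewrite /B.delta; case: (mu == wt0); rewrite ?rmorph1 ?rmorph0 /=; ring.
Qed.

End Sops.

End C.

Module D.
Import A B C.
Import Order.TTheory GRing.Theory Num.Theory.
Local Open Scope ring_scope.
Set Implicit Arguments.
Unset Strict Implicit.
Unset Printing Implicit Defensive.

Section Main.
Variables (n l : nat) (eps : algC).
Local Notation N := n.+1.
Local Notation Kf := (Kf n l).
Local Notation wt := (wt n).
Local Notation substK := (@substK n l).
Local Notation term := (term n l).
Local Notation Op := (Op n l).
Local Notation w := (@w n l).
Local Notation hb := (hb n l).
Local Notation tt_ := (tt_ n l).
Local Notation wt0 := (wt0 n).
Local Notation act := (@B.act n l).
Local Notation V := (B.V n l).
Local Notation delta := (@B.delta n l).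
Local Notation S := (@C.S n l).
Local Notation zk := (zk n l eps).
Local Notation ik := (ik n).
Local Notation jk := (jk n).
Local Notation tk := (tk n).
Local Notation ak := (ak n l).

Definition Dact i k (R : V) : V := fun mu =>
  (w (inord i) - hb - zk k) * R mu + tt_ * act (sumS n l i) R mu.

Lemma act_Yfactor (i : 'I_N) k R mu : act (Yfactor l eps i k) R mu = Dact i k R mu.
Proof. by rewrite /Yfactor /addO act_cat act_const act_scaleO /Dact inord_val. Qed.

Lemma act_sumS i R mu :
  act (sumS n l i) R mu = \sum_(d <- iota 0 (n - i)) act (stp n l i d) R mu.
Proof. by rewrite /sumS act_flatten big_map. Qed.

Lemma act_sumSf i R :
  act (sumS n l i) R = fun mu => \sum_(d <- iota 0 (n - i)) act (stp n l i d) R mu.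
Proof. by apply: functional_extensionality => mu; apply: act_sumS. Qed.

Lemma S_sum k (I : Type) (r : seq I) (F : I -> V) mu :
  S k (fun nu => \sum_(i <- r) F i nu) mu = \sum_(i <- r) S k (F i) mu.
Proof. exact: act_sum. Qed.

Lemma sumS_S i R mu : (i < n)%N ->
  act (sumS n l i) (S i R) mu = R mu + S i (act (sumS n l i.+1) R) mu.
Proof.
move=> ilt; rewrite act_sumS act_sumSf S_sum.
rewrite (_ : iota 0 (n - i) = 0%N :: iota 1 (n - i.+1)); last by rewrite -(subnSK ilt).
rewrite big_cons; congr (_ + _).
  have -> : stp n l i 0 = sop n l i by [].
  by change (S i (S i R) mu = R mu); rewrite S_inv.
rewrite (iotaDl 1 0) big_map; apply: eq_bigr => d _.
have -> : stp n l i (1 + d) =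
  mulO (sop n l i) (mulO (stp n l i.+1 d) (sop n l i)) by [].
rewrite !act_mulOf.
by change (S i (act (stp n l i.+1 d) (S i (S i R))) mu =
           S i (act (stp n l i.+1 d) R) mu); rewrite S_inv.
Qed.

Lemma sg_fix_hz k (p : {perm 'I_N}) (a : wt) :
  substK p a (- (hb + zk k)) = - (hb + zk k).
Proof. by rewrite rmorphN rmorphD /= substK_hb substK_zk. Qed.

Lemma Dact_S i k R mu : (i < n)%N ->
  Dact i k (S i R) mu = S i (Dact i.+1 k R) mu.
Proof.
move=> ilt; rewrite /Dact.
set Q := act (sumS n l i.+1) R.
have -> : (fun nu => (w (inord i.+1) - hb - zk k) * R nu + tt_ * Q nu) =
  (fun nu => (fun nu => w (jk i) * R nu) nu + (fun nu => - (hb + zk k) * R nu) nu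
     + (fun nu => tt_ * Q nu) nu).
  by apply: functional_extensionality => nu; rewrite /jk; ring.
rewrite !S_add S_w // !S_scal ?sg_fix_hz ?substK_tt // sumS_S // /ik -/Q; ring.
Qed.

Fixpoint Zf (m i : nat) (R : V) : V :=
  if m is m'.+1 then S i (Zf m' i.+1 R) else R.

Lemma Dact_Zf m i k R : (i + m <= n)%N ->
  Dact i k (Zf m i R) = Zf m i (Dact (i + m) k R).
Proof.
elim: m i R => [|m IH] i R H; first by rewrite addn0.
apply: functional_extensionality => mu.
change (Dact i k (S i (Zf m i.+1 R)) mu = S i (Zf m i.+1 (Dact (i + m.+1) k R)) mu).
rewrite Dact_S; last by apply: leq_trans H; rewrite -addSnnS leq_addr.
by rewrite IH ?addSnnS.
Qed.

Lemma Dact_n k R mu : Dact n k R mu = (w (inord n) - hb - zk k) * R mu.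
Proof. by rewrite /Dact act_sumS subnn big_nil mulr0 addr0. Qed.

Lemma act_oneO R : act (oneO n l) R = R.
Proof. by apply: functional_extensionality => mu; rewrite act_const mul1r. Qed.

Lemma act_prod_sop i m R :
  act (prodO [seq sop n l j | j <- iota i m]) R = Zf m i R.
Proof.
elim: m i => [|m IH] i /=; first exact: act_oneO.
by rewrite act_mulOf IH.
Qed.

Lemma act_prod_sop_delta (s : seq nat) :
  act (prodO [seq sop n l j | j <- s]) (delta wt0) = delta wt0.
Proof.
elim: s => [|j s IH] /=; first exact: act_oneO.
by rewrite act_mulOf IH; exact: S_delta0.
Qed.

Lemma act_single (x : term) mu :
  act [:: x] (delta wt0) mu = if lam x == mu then tc x else 0.
Proof. by rewrite -resc_act /resc big_mkcond big_seq1. Qed.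

Lemma lam_piinv : lam (head (1, 1%g, wt0) (piinvO n l)) = ewinv ord_max.
Proof.
apply/ffunP => j; rewrite !ffunE /=.
have -> : (((cycinvP n)^-1)%g j == ord0) = (j == ord_max).
  rewrite -(inj_eq (@perm_inj _ (cycinvP n))) permKV /cycinvP permE.
  congr (_ == _); apply: val_inj => /=; rewrite modn_small //.
by [].
Qed.

Lemma lam_pi : lam (head (1, 1%g, wt0) (piO n l)) = ew ord0.
Proof.
apply/ffunP => j; rewrite !ffunE /=.
have -> : (((cycP n)^-1)%g j == ord_max) = (j == ord0).
  rewrite -(inj_eq (@perm_inj _ (cycP n))) permKV /cycP permE.
  congr (_ == _); apply: val_inj => /=; rewrite modnn //.
by [].
Qed.

Definition Einv : V := delta (ewinv ord_max).

Lemma act_piinv : act (piinvO n l) (delta wt0) = Einv.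
Proof.
apply: functional_extensionality => mu.
rewrite act_single (_ : lam _ = ewinv ord_max); last exact: lam_piinv.
by rewrite /Einv /B.delta eq_sym.
Qed.

Lemma act_pi : act (piO n l) (delta wt0) = delta (ew ord0).
Proof.
apply: functional_extensionality => mu.
rewrite act_single (_ : lam _ = ew ord0); last exact: lam_pi.
by rewrite /B.delta eq_sym.
Qed.

Lemma Xinv_act k : (k <= n)%N ->
  act (Xinvop n l k) (delta wt0) = Zf (n - k) k Einv.
Proof.
elim: k => [|k IH] H.
  by rewrite /= /Xinv0 act_mulOf act_piinv act_prod_sop subn0.
rewrite /= !act_mulOf.
change (S k (act (Xinvop n l k) (S k (delta wt0))) = Zf (n - k.+1) k.+1 Einv).
rewrite S_delta0 IH ?(ltnW H) // -(subnSK H) /=.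
by rewrite S_inv.
Qed.

Fixpoint Wf (k : nat) : V :=
  if k is k'.+1 then S k' (Wf k') else delta (ew ord0).

Lemma X_act k : act (Xop n l k) (delta wt0) = Wf k.
Proof.
elim: k => [|k IH].
  by rewrite /= /X0 act_mulOf act_prod_sop_delta act_pi.
rewrite /= !act_mulOf.
change (S k (act (Xop n l k) (S k (delta wt0))) = S k (Wf k)).
by rewrite S_delta0 IH.
Qed.

End Main.

End D.

Module E.
Import A B C D.
Import Order.TTheory GRing.Theory Num.Theory.
Local Open Scope ring_scope.
Set Implicit Arguments.
Unset Strict Implicit.
Unset Printing Implicit Defensive.

Lemma gen1 (F : fieldType) (x y t : F) : x - y != 0 ->
  1 + t / (x - y) = (y - x - t) / (y - x).
Proof.
move=> H; have H' : y - x != 0 by rewrite -opprB oppr_eq0.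
by field; rewrite H H'.
Qed.
Lemma gen2 (F : fieldType) (x y t : F) : x - y != 0 ->
  1 + t / (x - y) = (x - y + t) / (x - y).
Proof. by move=> H; field; rewrite H. Qed.

Section Forms.
Variables (n l : nat).
Local Notation N := n.+1.
Local Notation Kf := (Kf n l).
Local Notation wt := (wt n).
Local Notation substK := (@substK n l).
Local Notation w := (@w n l).
Local Notation hb := (hb n l).
Local Notation tt_ := (tt_ n l).
Local Notation wt0 := (wt0 n).
Local Notation act := (@B.act n l).
Local Notation V := (B.V n l).
Local Notation delta := (@B.delta n l).
Local Notation S := (@C.S n l).
Local Notation ik := (ik n).
Local Notation jk := (jk n).
Local Notation tk := (tk n).
Local Notation ak := (ak n l).
Local Notation sg k := (substK (tk k) wt0).
Local Notation Zf := (@Zf n l).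
Local Notation Wf := (@Wf n l).
Local Notation Einv := (@D.Einv n l).

Definition formP (e : 'I_N -> wt) (P : pred 'I_N) (R : V) (c : 'I_N -> Kf) :=
  forall lam, R lam = \sum_(j < N | P j) (if lam == e j then c j else 0).

Lemma sum_at (e : 'I_N -> wt) (P : pred 'I_N) (c : 'I_N -> Kf) j0 :
  injective e ->
  \sum_(j < N | P j) (if e j0 == e j then c j else 0) = if P j0 then c j0 else 0.
Proof.
move=> einj; rewrite big_mkcond (bigD1 j0) //= eqxx big1 ?addr0 //.
move=> j jj0; rewrite (inj_eq einj) eq_sym (negbTE jj0).
by case: (P j).
Qed.

Lemma formP_intro e P R c : injective e ->
  (forall j, R (e j) = if P j then c j else 0) ->
  (forall lam, (forall j, lam != e j) -> R lam = 0) -> formP e P R c.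
Proof.
move=> einj Hat Hout lam.
case: (pickP (fun j => lam == e j)) => [j /eqP -> | H].
  by rewrite sum_at // Hat.
rewrite Hout; last by move=> j; rewrite H.
by rewrite big1 // => j _; rewrite H.
Qed.

Lemma formP_at e P R c j : injective e -> formP e P R c ->
  R (e j) = if P j then c j else 0.
Proof. by move=> einj H; rewrite H sum_at. Qed.

Lemma formP_out e P R c lam : formP e P R c ->
  (forall j, lam != e j) -> R lam = 0.
Proof.
move=> H Hl; rewrite H big1 // => j _.
by rewrite (negbTE (Hl j)).
Qed.

Lemma ew_inj : injective (@ew n).
Proof.
move=> i j /(congr1 (fun f : wt => f i)); rewrite !ffunE eqxx.
by case: eqP => // _ /eqP.
Qed.

Lemma ewinv_inj : injective (@ewinv n).
Proof.
move=> i j /(congr1 (fun f : wt => f i)); rewrite !ffunE eqxx.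
by case: eqP => // _ /eqP.
Qed.

Lemma sw_ew k j : sw k (ew j) = ew (tk k j).
Proof.
apply/ffunP => m; rewrite !ffunE subr0.
by rewrite (canF_eq (tpermK _ _)).
Qed.

Lemma sw_ewinv k j : sw k (ewinv j) = ewinv (tk k j).
Proof.
apply/ffunP => m; rewrite !ffunE subr0.
by rewrite (canF_eq (tpermK _ _)).
Qed.

Lemma sw_out (e : 'I_N -> wt) k lam :
  (forall j, sw k (e j) = e (tk k j)) ->
  (forall j, lam != e j) -> forall j, sw k lam != e j.
Proof.
move=> He Hl j; apply/eqP => E.
have := Hl (tk k j); rewrite -He -E sw_sw eqxx //.
Qed.

Lemma ik_val k : (k <= n)%N -> val (ik k) = k.
Proof. by move=> H; rewrite /C.ik /= inordK. Qed.
Lemma jk_val k : (k < n)%N -> val (jk k) = k.+1.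
Proof. by move=> H; rewrite /C.jk /= inordK. Qed.

Definition gX k := \prod_(j < N | (j < k)%N)
  ((w (inord k) - w j - tt_) / (w (inord k) - w j)).

Lemma sg_w_other k (j : 'I_N) : j != ik k -> j != jk k -> sg k (w j) = w j.
Proof. by move=> h1 h2; rewrite substK_w0 /C.tk tpermD // eq_sym. Qed.

Lemma gX_step k : (k < n)%N -> (1 + ak k) * sg k (gX k) = gX k.+1.
Proof.
move=> kn.
have kN : (k <= n)%N by apply: ltnW.
have ne : w (ik k) - w (jk k) != 0 by apply: w_neq; apply: ij_neq.
rewrite /C.ak gen1 // rmorph_prod /gX.
rewrite [in RHS](bigD1 (ik k)) /=; last by rewrite ik_val.
congr (_ * _).
rewrite [in RHS](eq_bigl (fun j : 'I_N => (j < k)%N)); last first.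
  move=> j; rewrite ltnS leq_eqVlt -(inj_eq val_inj) ik_val //.
  by case: (j =P k :> nat) => [->|]; rewrite ?ltnn ?andbF //= andbT.
apply: eq_bigr => j jk'.
have j1 : j != ik k by rewrite -(inj_eq val_inj) ik_val // neq_ltn jk'.
have j2 : j != jk k.
  by rewrite -(inj_eq val_inj) jk_val // neq_ltn ltnS ltnW.
rewrite rmorphM fmorphV !rmorphB /= substK_tt (sg_w_other j1 j2).
by rewrite (sg_w_i n l k).
Qed.

Lemma S_at (e : 'I_N -> wt) k R j :
  (forall j, sw k (e j) = e (tk k j)) ->
  S k R (e j) = (1 + ak k) * sg k (R (e (tk k j))) + (- ak k) * R (e j).
Proof. by move=> He; rewrite act_sop He. Qed.

Lemma S_out (e : 'I_N -> wt) k R c P lam :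
  (forall j, sw k (e j) = e (tk k j)) -> formP e P R c ->
  (forall j, lam != e j) -> S k R lam = 0.
Proof.
move=> He HR Hl; rewrite act_sop (formP_out HR Hl) (formP_out HR (sw_out He Hl)).
by rewrite rmorph0 !mulr0 addr0.
Qed.

Lemma Wf_form k : (k <= n)%N -> exists c,
  formP (@ew n) (fun j : 'I_N => (j <= k)%N) (Wf k) c /\ c (inord k) = gX k.
Proof.
elim: k => [|k IH] H.
  exists (fun _ => 1); split.
    apply: formP_intro; first exact: ew_inj.
      move=> j; rewrite /= /B.delta (inj_eq (@ew_inj)) leqn0.
      by rewrite -(inj_eq val_inj).
    by move=> lam Hl; rewrite /= /B.delta (negbTE (Hl ord0)).
  by rewrite /gX big1.
have kn : (k < n)%N by [].
have [c' [Hc' Hg]] := IH (ltnW H).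
have ij := ij_neq kn.
have ikv := ik_val (ltnW kn); have jkv := jk_val kn.
exists (fun j => if j == jk k then (1 + ak k) * sg k (c' (ik k))
  else if j == ik k then - ak k * c' (ik k)
  else (1 + ak k) * sg k (c' j) + (- ak k) * c' j).
split; last first.
  by rewrite /C.jk eqxx -(gX_step kn) -Hg.
apply: formP_intro; first exact: ew_inj.
  have HA j : Wf k (ew j) = (if (j <= k)%N then c' j else 0).
    by rewrite Hc' sum_at //; apply: ew_inj.
  move=> j; rewrite /= (S_at _ _ (sw_ew k)) !HA.
  case: (j =P jk k) => [->|/eqP j2].
    by rewrite /C.tk tpermR ikv leqnn jkv ltnn ltnSn mulr0 addr0.
  case: (j =P ik k) => [->|/eqP j1].
    by rewrite /C.tk tpermL jkv ltnn ikv leqnn leqnSn rmorph0 mulr0 add0r.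
  rewrite /C.tk tpermD 1?eq_sym //.
  have -> : (j <= k.+1)%N = (j <= k)%N.
    rewrite leq_eqVlt ltnS; case: eqP => // E.
    by move: j2; rewrite -(inj_eq val_inj) jkv /= E eqxx.
  by case: (j <= k)%N; rewrite ?rmorph0 ?mulr0 ?addr0.
by move=> lam Hl; apply: (S_out (sw_ew k) Hc' Hl).
Qed.

Definition hX i := \prod_(j < N | (i < j)%N)
  ((w (inord i) - w j + tt_) / (w (inord i) - w j)).

Fixpoint tau (m i : nat) (x : Kf) : Kf :=
  if m is m'.+1 then sg i (tau m' i.+1 x) else x.

Lemma hX_step i : (i < n)%N -> (1 + ak i) * sg i (hX i.+1) = hX i.
Proof.
move=> kn.
have kN : (i <= n)%N by apply: ltnW.
have ne : w (ik i) - w (jk i) != 0 by apply: w_neq; apply: ij_neq.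
rewrite /C.ak gen2 // rmorph_prod /hX.
rewrite [in RHS](bigD1 (jk i)) /=; last by rewrite jk_val.
congr (_ * _).
rewrite [in RHS](eq_bigl (fun j : 'I_N => (i.+1 < j)%N)); last first.
  move=> j; rewrite -(inj_eq val_inj) jk_val //=.
  by case: (ltngtP i.+1 j).
apply: eq_bigr => j jk'.
have j1 : j != ik i.
  by rewrite -(inj_eq val_inj) ik_val // gtn_eqF // (ltn_trans _ jk').
have j2 : j != jk i by rewrite -(inj_eq val_inj) jk_val // gtn_eqF.
rewrite rmorphM fmorphV rmorphD !rmorphB /= substK_tt (sg_w_other j1 j2).
by rewrite (sg_w_j n l i).
Qed.


Lemma Zf_form m i G : (i + m)%N = n -> exists c,
  formP (@ewinv n) (fun j : 'I_N => (i <= j)%N) (Zf m i (fun mu => G * Einv mu)) c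
  /\ c (inord i) = hX i * tau m i G.
Proof.
elim: m i => [|m IH] i H.
  rewrite addn0 in H; subst i.
  exists (fun _ => G); split.
    apply: formP_intro; first exact: ewinv_inj.
      move=> j; rewrite /= /D.Einv /B.delta (inj_eq (@ewinv_inj)).
      have -> : (n <= j)%N = (j == ord_max).
        by rewrite -(inj_eq val_inj) /= eqn_leq leq_ord.
      by case: (j == ord_max); rewrite ?mulr1 ?mulr0.
    by move=> lam Hl; rewrite /= /D.Einv /B.delta (negbTE (Hl ord_max)) mulr0.
  rewrite /hX big1 ?mul1r // => j; rewrite ltnNge -ltnS ltn_ord //.
have kn : (i < n)%N by rewrite -H -addSnnS leq_addr.
have [c' [Hc' Hg]] := IH i.+1 (etrans (addSnnS _ _) H).
have ij := ij_neq kn.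
have ikv := ik_val (ltnW kn); have jkv := jk_val kn.
exists (fun j => if j == ik i then (1 + ak i) * sg i (c' (jk i))
  else if j == jk i then - ak i * c' (jk i)
  else (1 + ak i) * sg i (c' j) + (- ak i) * c' j).
split; last first.
  rewrite /C.ik eqxx /=.
  by rewrite Hg rmorphM mulrA /= hX_step.
apply: formP_intro; first exact: ewinv_inj.
  have HA j : Zf m i.+1 (fun mu => G * Einv mu) (ewinv j) =
      (if (i.+1 <= j)%N then c' j else 0).
    by rewrite Hc' sum_at //; apply: ewinv_inj.
  move=> j; rewrite /= (S_at _ _ (sw_ewinv i)) !HA.
  case: (j =P ik i) => [->|/eqP j1].
    by rewrite /C.tk tpermL jkv leqnn ikv ltnn leqnn mulr0 addr0.
  case: (j =P jk i) => [->|/eqP j2].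
    by rewrite /C.tk tpermR ikv ltnn jkv leqnn leqnSn rmorph0 mulr0 add0r.
  rewrite /C.tk tpermD 1?eq_sym //.
  have -> : (i <= j)%N = (i < j)%N.
    rewrite leq_eqVlt; case: eqP => // E.
    by move: j1; rewrite -(inj_eq val_inj) ikv /= -E eqxx.
  by case: (i < j)%N; rewrite ?rmorph0 ?mulr0 ?addr0.
by move=> lam Hl; apply: (S_out (sw_ewinv i) Hc' Hl).
Qed.

End Forms.

End E.

Module F.
Import A B C D E.
Import Order.TTheory GRing.Theory Num.Theory.
Local Open Scope ring_scope.
Set Implicit Arguments.
Unset Strict Implicit.
Unset Printing Implicit Defensive.

Section Final.
Variables (n l : nat) (eps : algC).
Local Notation N := n.+1.
Local Notation Kf := (Kf n l).
Local Notation wt := (wt n).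
Local Notation substK := (@substK n l).
Local Notation Op := (Op n l).
Local Notation w := (@w n l).
Local Notation hb := (hb n l).
Local Notation tt_ := (tt_ n l).
Local Notation wt0 := (wt0 n).
Local Notation act := (@B.act n l).
Local Notation V := (B.V n l).
Local Notation delta := (@B.delta n l).
Local Notation S := (@C.S n l).
Local Notation Zf := (@D.Zf n l).
Local Notation Einv := (@D.Einv n l).
Local Notation zk := (zk n l eps).
Local Notation sg k := (substK (C.tk n k) wt0).
Local Notation tau := (@E.tau n l).
Local Notation gX := (@E.gX n l).
Local Notation hX := (@E.hX n l).

Lemma gX_neq0 k : (k <= n)%N -> gX k != 0.
Proof.
move=> kn; apply/prodf_neq0 => j jk.
have ne : (inord k : 'I_N) != j.
  by rewrite -(inj_eq val_inj) /= inordK // gtn_eqF.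
by rewrite mulf_neq0 ?invr_eq0 ?wmt_neq ?w_neq.
Qed.

Lemma hX_neq0 i : (i <= n)%N -> hX i != 0.
Proof.
move=> kn; apply/prodf_neq0 => j jk.
have ne : (inord i : 'I_N) != j.
  by rewrite -(inj_eq val_inj) /= inordK // ltn_eqF.
by rewrite mulf_neq0 ?invr_eq0 ?wt_neq ?w_neq.
Qed.

Lemma tau1 m i : tau m i 1 = 1.
Proof. by elim: m i => [|m IH] i //=; rewrite IH rmorph1. Qed.

Lemma tau_prodD m i (s : seq nat) : (i + m)%N = n ->
  tau m i (\prod_(k <- s) (w (inord n) - hb - zk k)) =
  \prod_(k <- s) (w (inord i) - hb - zk k).
Proof.
elim: m i => [|m IH] i H; first by rewrite addn0 in H; subst i.
rewrite /= IH; last by rewrite addSnnS.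
rewrite rmorph_prod; apply: eq_bigr => k _.
by rewrite !rmorphB /= substK_hb substK_zk (sg_w_j n l i).
Qed.

Lemma act_prod_Y (i : 'I_N) (s : seq nat) R :
  act (prodO [seq Yfactor l eps i k | k <- s]) (Zf (n - i) i R) =
  Zf (n - i) i (fun mu => (\prod_(k <- s) (w (inord n) - hb - zk k)) * R mu).
Proof.
elim: s => [|k s IH] /=.
  rewrite act_oneO; congr Zf.
  by apply: functional_extensionality => mu; rewrite big_nil mul1r.
rewrite act_mulOf IH.
have -> : act (Yfactor l eps i k) = Dact eps i k.
  apply: functional_extensionality => Q; apply: functional_extensionality => mu.
  exact: act_Yfactor.
rewrite Dact_Zf; last by rewrite subnKC // leq_ord.
rewrite subnKC; last exact: leq_ord.
congr Zf; apply: functional_extensionality => mu.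
by rewrite Dact_n big_cons mulrA.
Qed.

Lemma leading_form (A : Op) (e : 'I_N -> wt) P c i0 : injective e ->
  formP e P (resc A) c -> P i0 -> c i0 != 0 ->
  (forall j, P j -> j != i0 -> lessdot (e j) (e i0)) ->
  leading A (e i0) (c i0).
Proof.
move=> einj Hf Pi0 c0 Hl; split; first by rewrite (formP_at _ einj Hf) Pi0.
split => // lam ne nz.
case: (pickP (fun j => lam == e j)) => [j /eqP E | H].
  subst lam; move: nz; rewrite (formP_at _ einj Hf).
  case Pj: (P j); last by rewrite eqxx.
  move=> _; apply: Hl => //; apply/eqP => E; move: ne; rewrite E eqxx.
  by [].
by move: nz; rewrite (formP_out Hf) ?eqxx // => j; rewrite H.
Qed.

Lemma wle_pair (a b : 'I_N) (lam mu : wt) : (a < b)%N ->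
  (forall k, mu k - lam k = ((k == a) : nat)%:Z - ((k == b) : nat)%:Z) ->
  wle lam mu.
Proof.
move=> ab H; exists (fun x y => ((x == a) && (y == b)) : nat) => k.
rewrite H (bigD1 a) //= [X in _ = _ + X]big1; last first.
  by move=> x xa; apply: big1 => y _; rewrite (negbTE xa) /= mul0r.
rewrite (bigD1 b) //= [X in _ = _ + X + _]big1; last first.
  by move=> y /andP[_ yb]; rewrite (negbTE yb) andbF mul0r.
by rewrite !eqxx mul1r !addr0.
Qed.

Lemma dom_ew (j : 'I_N) : dom_of (ew j) (ew ord0).
Proof.
split.
  move=> x y xy; rewrite !ffunE lez_nat.
  case: (y =P ord0) => [Ey|_]; last exact: leq0n.
  have -> : x == ord0.
    by rewrite -(inj_eq val_inj) /= -leqn0 -[0%N]/(val (ord0 : 'I_N)) -Ey.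
  by [].
exists (tperm ord0 j) => k; rewrite !ffunE (canF_eq (tpermK _ _)) tpermR.
by [].
Qed.

Lemma dom_ewinv (j : 'I_N) : dom_of (ewinv j) (ewinv ord_max).
Proof.
split.
  move=> x y xy; rewrite !ffunE lerN2 lez_nat.
  case: (x =P ord_max) => [Ex|_]; last exact: leq0n.
  have -> : y == ord_max.
    rewrite -(inj_eq val_inj) /= eqn_leq leq_ord /=.
    by move: xy; rewrite Ex.
  by [].
exists (tperm ord_max j) => k; rewrite !ffunE (canF_eq (tpermK _ _)) tpermR.
by [].
Qed.

Lemma lessdot_ew (i j : 'I_N) : (j < i)%N -> lessdot (ew j) (ew i).
Proof.
move=> ji; exists (ew ord0), (ew ord0); split; first exact: dom_ew.
split; first exact: dom_ew.
right; split => //; split.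
  apply: (wle_pair ji) => k; rewrite !ffunE //.
move/ew_inj => E; move: ji; rewrite E ltnn //.
Qed.

Lemma lessdot_ewinv (i j : 'I_N) : (i < j)%N -> lessdot (ewinv j) (ewinv i).
Proof.
move=> ij; exists (ewinv ord_max), (ewinv ord_max); split; first exact: dom_ewinv.
split; first exact: dom_ewinv.
right; split => //; split.
  apply: (wle_pair ij) => k; rewrite !ffunE opprK addrC //.
move/ewinv_inj => E; move: ij; rewrite E ltnn //.
Qed.

End Final.

End F.

Import A B C D E F.
Import Order.TTheory GRing.Theory Num.Theory.
Theorem proposition5p8 (n l : nat) (eps : algC) :
  (0 < l)%N -> l.-primitive_root eps ->
  (* (1) *)
  ((forall i : 'I_n.+1, exists g : 'I_n.+1 -> Kf n l,
      (forall lambda, resc (Xop n l i) lambda =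
         \sum_(j < n.+1 | (j <= i)%N) (if lambda == ew j then g j else 0)) /\
      leading (Xop n l i) (ew i) (g i)) /\
   leading (Xop n l n) (ew ord_max)
     (\prod_(j < n.+1 | j != ord_max)
        ((w l ord_max - w l j - tt_ n l) / (w l ord_max - w l j)))) /\
  (* (2) *)
  ((forall i : 'I_n.+1, exists g : 'I_n.+1 -> Kf n l,
      (forall lambda, resc (Xinvop n l i) lambda =
         \sum_(j < n.+1 | (i <= j)%N) (if lambda == ewinv j then g j else 0)) /\
      leading (Xinvop n l i) (ewinv i) (g i)) /\
   leading (Xinvop n l 0) (ewinv ord0)
     (\prod_(j < n.+1 | j != ord0)
        ((w l ord0 - w l j + tt_ n l) / (w l ord0 - w l j)))) /\
  (* (3) *)
  ((forall i : 'I_n.+1, exists g : 'I_n.+1 -> Kf n l,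
      (forall lambda, resc (Yop l eps i) lambda =
         \sum_(j < n.+1 | (i <= j)%N) (if lambda == ewinv j then g j else 0)) /\
      leading (Yop l eps i) (ewinv i) (g i)) /\
   leading (Yop l eps ord0) (ewinv ord0)
     ((\prod_(1 <= k < l.+1) (w l ord0 - hb n l - zk n l eps k)) *
      \prod_(j < n.+1 | j != ord0)
        ((w l ord0 - w l j + tt_ n l) / (w l ord0 - w l j)))).
Proof.
move=> _ _.
have P1 : forall k : 'I_n.+1, exists c : 'I_n.+1 -> Kf n l,
    formP (@ew n) (fun j : 'I_n.+1 => (j <= k)%N) (resc (Xop n l k)) c /\
    c k = E.gX n l k.
  move=> k; have [c [Hc Hg]] := Wf_form l (leq_ord k).
  exists c; split; last by rewrite -Hg inord_val.
  by move=> lam; rewrite resc_act X_act.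
have P2 : forall k : 'I_n.+1, exists c : 'I_n.+1 -> Kf n l,
    formP (@ewinv n) (fun j : 'I_n.+1 => (k <= j)%N) (resc (Xinvop n l k)) c /\
    c k = E.hX n l k.
  move=> k.
  have [c [Hc Hg]] := @Zf_form n l (n - k)%N k (1 : Kf n l) (subnKC (leq_ord k)).
  exists c; split; last by rewrite -[in LHS](inord_val k) Hg tau1 mulr1.
  move=> lam; rewrite resc_act Xinv_act ?leq_ord // -Hc; congr (D.Zf _ _ _ _).
  by apply: functional_extensionality => mu; rewrite mul1r.
have P3 : forall k : 'I_n.+1, exists c : 'I_n.+1 -> Kf n l,
    formP (@ewinv n) (fun j : 'I_n.+1 => (k <= j)%N) (resc (Yop l eps k)) c /\
    c k = E.hX n l k * \prod_(m <- iota 1 l) (w l (inord k) - hb n l - zk n l eps m).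
  move=> k.
  have [c [Hc Hg]] := @Zf_form n l (n - k)%N k
     (\prod_(m <- iota 1 l) (w l (inord n) - hb n l - zk n l eps m))
     (subnKC (leq_ord k)).
  exists c; split; last by rewrite -[in LHS](inord_val k) Hg tau_prodD // subnKC // leq_ord.
  move=> lam; rewrite resc_act /Yop act_mulO Xinv_act ?leq_ord //.
  by rewrite act_prod_Y.
split.
  split.
    move=> i; have [c [Hc Hg]] := P1 i; exists c; split; first exact: Hc.
    apply: (leading_form (@ew_inj n) Hc) => //; first by rewrite Hg gX_neq0 // leq_ord.
    by move=> j ji jne; apply: lessdot_ew; rewrite ltn_neqAle ji andbT -(inj_eq val_inj) in jne *.
  have [c [Hc Hg]] := P1 ord_max.
  have -> : \prod_(j < n.+1 | j != ord_max)
        ((w l ord_max - w l j - tt_ n l) / (w l ord_max - w l j)) = c ord_max.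
    rewrite Hg /E.gX inord_val; apply: eq_bigl => j.
    by rewrite -(inj_eq val_inj) /= ltn_neqAle leq_ord andbT.
  apply: (leading_form (@ew_inj n) Hc) => //; first by rewrite Hg gX_neq0 // leq_ord.
  by move=> j ji jne; apply: lessdot_ew; rewrite ltn_neqAle ji andbT -(inj_eq val_inj) in jne *.
split.
  split.
    move=> i; have [c [Hc Hg]] := P2 i; exists c; split; first exact: Hc.
    apply: (leading_form (@ewinv_inj n) Hc) => //; first by rewrite Hg hX_neq0 // leq_ord.
    by move=> j ij jne; apply: lessdot_ewinv; rewrite ltn_neqAle ij andbT -(inj_eq val_inj) eq_sym in jne *.
  have [c [Hc Hg]] := P2 ord0.
  have -> : \prod_(j < n.+1 | j != ord0)
        ((w l ord0 - w l j + tt_ n l) / (w l ord0 - w l j)) = c ord0.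
    rewrite Hg /E.hX inord_val; apply: eq_bigl => j.
    by rewrite -(inj_eq val_inj) /= lt0n.
  apply: (leading_form (@ewinv_inj n) Hc) => //; first by rewrite Hg hX_neq0 // leq_ord.
  by move=> j ij jne; apply: lessdot_ewinv; rewrite ltn_neqAle ij andbT -(inj_eq val_inj) eq_sym in jne *.
have Fneq : forall k : 'I_n.+1,
    \prod_(m <- iota 1 l) (w l (inord k) - hb n l - zk n l eps m) != 0.
  by move=> k; rewrite prodf_seq_neq0; apply/allP => m _; rewrite Dfac_neq.
split.
  move=> i; have [c [Hc Hg]] := P3 i; exists c; split; first exact: Hc.
  apply: (leading_form (@ewinv_inj n) Hc) => //.
    by rewrite Hg mulf_neq0 ?hX_neq0 ?Fneq // leq_ord.
  by move=> j ij jne; apply: lessdot_ewinv; rewrite ltn_neqAle ij andbT -(inj_eq val_inj) eq_sym in jne *.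
have [c [Hc Hg]] := P3 ord0.
have -> : (\prod_(1 <= k < l.+1) (w l ord0 - hb n l - zk n l eps k)) *
      \prod_(j < n.+1 | j != ord0)
        ((w l ord0 - w l j + tt_ n l) / (w l ord0 - w l j)) = c ord0.
  rewrite Hg inord_val mulrC; congr (_ * _).
    rewrite /E.hX inord_val; apply: eq_bigl => j.
    by rewrite -(inj_eq val_inj) /= lt0n.
  by rewrite /index_iota subSS subn0.
apply: (leading_form (@ewinv_inj n) Hc) => //.
  by rewrite Hg mulf_neq0 ?hX_neq0 ?Fneq // leq_ord.
by move=> j ij jne; apply: lessdot_ewinv; rewrite ltn_neqAle ij andbT -(inj_eq val_inj) eq_sym in jne *.
Qed.
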